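(* Let $1\le k<n$ and let $V=\bigoplus_{i=1}^{2n-1}V_i$, $W=\bigoplus_{i=1}^{2n-1}W_i$ be graded complex vector spaces with $\dim V_i=\dim V_{2n-i}$, $W_i=0$ for $i\notin\{k,2n-k\}$, $W_k=W_{2n-k}$ one-dimensional, and satisfying the nonemptiness condition below. Then for every $(B_{i,j},\Gamma_i,\Delta_i)\in\Lambda^{\mathrm A_{2n-1}}(V,W)$: \[\Delta_kB_{k,k-j+1,k}\Gamma_k=(-1)^j\Delta_{2n-k}B_{2n-k,2n-k+j-1,2n-k}\Gamma_{2n-k},\] \[\Delta_kB_{k,k-j+1,2n-k}\Gamma_{2n-k}=(-1)^{j-1}\Delta_kB_{k,2n-k+j-1,2n-k}\Gamma_{2n-k},\] \[\Delta_{2n-k}B_{2n-k,k-j+1,k}\Gamma_k=(-1)^{j-1}\Delta_{2n-k}B_{2n-k,2n-k+j-1,k}\Gamma_k\] for $1\le j\le k$, and \[\Delta_{2n-k}B_{2n-k,2n-k-j+1,2n-k}\Gamma_{2n-k}=(-1)^j\Delta_kB_{k,k+j-1,k}\Gamma_k\] for $1\le j\le 2n-k$ (all these being scalars, using $W_k=W_{2n-k}$).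
   Context: $B_{i,j}$ ($|i-j|=1$) is a linear map $V_j\to V_i$, $\Gamma_i:W_i\to V_i$, $\Delta_i:V_i\to W_i$. $\Lambda^{\mathrm A_{2n-1}}(V,W)$ is the set of tuples satisfying (with $B_{0,1},B_{1,0},B_{2n,2n-1},B_{2n-1,2n}$ zero): $B_{i,i+1}B_{i+1,i}-B_{i,i-1}B_{i-1,i}=\Gamma_i\Delta_i$ for $1\le i\le n-1$; $-B_{n,n-1}B_{n-1,n}-B_{n,n+1}B_{n+1,n}=\Gamma_n\Delta_n$; $B_{i,i-1}B_{i-1,i}-B_{i,i+1}B_{i+1,i}=\Gamma_i\Delta_i$ for $n+1\le i\le2n-1$. Path notation: $B_{p,q,r}$ denotes the composite $V_r\to V_p$ of the maps $B_{\cdot,\cdot}$ along the path in the line $1,\dots,2n-1$ going from $r$ monotonically to $q$ and then monotonically to $p$ (e.g. $B_{k,k-j+1,2n-k}$ goes from $2n-k$ down to $k-j+1$ and then up to $k$); a path of length zero gives the identity. Nonemptiness condition: with $v_i=\dim V_i$, put $s_1=1-v_1$, $s_i=1-v_i+v_{i-1}$ for $2\le i\le k$, $s_i=-v_i+v_{i-1}$ for $k+1\le i\le n$; then $s_i\in\{-1,0,1\}$ for all $i$ and $|\{i:s_i\ne0\}|\le k$. *)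

(* Defs.v *)
From HB Require Import structures.
From mathcomp Require Import all_boot all_order all_algebra.
From mathcomp Require Import reals complex.
Set Implicit Arguments. Unset Strict Implicit. Unset Printing Implicit Defensive.
Import Order.TTheory GRing.Theory Num.Theory.
Local Open Scope ring_scope.

(* Graded spaces: V_i = C^(v i), W_i = C^(w i).  Linear maps are matrices acting
   on column vectors, composition = *m.
   Bup i  : 'M_(v i, v i.+1)  is  B_{i,i+1} : V_{i+1} -> V_i
   Bdn i  : 'M_(v i.+1, v i)  is  B_{i+1,i} : V_i -> V_{i+1}
   Gam i  : 'M_(v i, w i)     is  Gamma_i : W_i -> V_i
   Del i  : 'M_(w i, v i)     is  Delta_i : V_i -> W_i *)
Section Paths.
Variables (C : fieldType) (v : nat -> nat).
Variables (Bup : forall i, 'M[C]_(v i, v i.+1)) (Bdn : forall i, 'M[C]_(v i.+1, v i)).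

Fixpoint goDown (q len : nat) : 'M[C]_(v q, v (len + q)) :=
  match len return 'M[C]_(v q, v (len + q)) with
  | 0 => 1%:M
  | l.+1 => goDown q l *m Bup (l + q)
  end.

Fixpoint goUp (q len : nat) : 'M[C]_(v (len + q), v q) :=
  match len return 'M[C]_(v (len + q), v q) with
  | 0 => 1%:M
  | l.+1 => Bdn (l + q) *m goUp q l
  end.

(* monotone composite V_r -> V_q (identity when r = q); conform_mx only
   transports along the (true) equality of dimensions (r - q) + q = r etc. *)
Definition monoB (q r : nat) : 'M[C]_(v q, v r) :=
  if (q <= r)%N then conform_mx 0 (goDown q (r - q))
  else conform_mx 0 (goUp r (q - r)).

(* B_{p,q,r} : V_r -> V_p, going from r monotonically to q, then monotonically to p *)
Definition pathB (p q r : nat) : 'M[C]_(v p, v r) := monoB p q *m monoB q r.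
End Paths.

Definition LambdaA (C : fieldType) (n : nat) (v w : nat -> nat)
  (Bup : forall i, 'M[C]_(v i, v i.+1)) (Bdn : forall i, 'M[C]_(v i.+1, v i))
  (Gam : forall i, 'M[C]_(v i, w i)) (Del : forall i, 'M[C]_(w i, v i)) : Prop :=
  [/\ Bup 0 = 0, Bdn 0 = 0, Bdn (2 * n).-1 = 0, Bup (2 * n).-1 = 0 &
      (* equation at index i = m.+1, 1 <= i <= 2n-1 :
         B_{i,i+1}B_{i+1,i} = Bup i *m Bdn i ; B_{i,i-1}B_{i-1,i} = Bdn m *m Bup m *)
      forall m, (m.+1 <= (2 * n).-1)%N ->
        ((m.+1 <= n.-1)%N -> Bup m.+1 *m Bdn m.+1 - Bdn m *m Bup m = Gam m.+1 *m Del m.+1) /\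
        (m.+1 = n -> - (Bdn m *m Bup m) - Bup m.+1 *m Bdn m.+1 = Gam m.+1 *m Del m.+1) /\
        ((n.+1 <= m.+1)%N -> Bdn m *m Bup m - Bup m.+1 *m Bdn m.+1 = Gam m.+1 *m Del m.+1)].

Definition s_nonempty (k : nat) (v : nat -> nat) (i : nat) : int :=
  (if (i <= k)%N then 1 else 0) - (v i)%:Z + (if i == 1 then 0 else (v i.-1)%:Z).

Definition nonempty_cond (n k : nat) (v : nat -> nat) : Prop :=
  (forall i, (1 <= i <= n)%N -> s_nonempty k v i \in [:: -1; 0; 1]) /\
  (count (fun i => s_nonempty k v i != 0) (iota 1 n) <= k)%N.

(* the scalar represented by a linear map between one-dimensional spaces W_a, W_b
   (both identified with C^1): the unique entry of X when a = b = 1 *)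
Definition scal (C : fieldType) (a b : nat) (X : 'M[C]_(a, b)) : C :=
  (conform_mx (0 : 'M[C]_1) X) 0 0.

(* Main.v *)
Require Import Defs.
From HB Require Import structures.
From mathcomp Require Import all_boot all_order all_algebra.
From mathcomp Require Import reals complex.
From mathcomp Require Import zify ring.
Set Implicit Arguments. Unset Strict Implicit. Unset Printing Implicit Defensive.
Import Order.TTheory GRing.Theory Num.Theory.
Local Open Scope ring_scope.
Section Mono.
Variables (C : fieldType) (v : nat -> nat).
Variables (Bup : forall i, 'M[C]_(v i, v i.+1)) (Bdn : forall i, 'M[C]_(v i.+1, v i)).
Notation mB := (monoB Bup Bdn).

Lemma mB_down q l : mB q (l + q) = goDown Bup q l.
Proof. by rewrite /monoB leq_addl addnK conform_mx_id. Qed.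

Lemma mB_up r l : (0 < l)%N -> mB (l + r) r = goUp Bdn r l.
Proof.
move=> l0; rewrite /monoB; case: leqP => h; first by move: h; rewrite -{2}(add0n r) leq_add2r leqn0 => /eqP l0'; move: l0; rewrite l0'.
by rewrite addnK conform_mx_id.
Qed.

Lemma mB0 q : mB q q = 1%:M.
Proof. by rewrite /monoB leqnn subnn conform_mx_id. Qed.

Lemma mBD q s : (q <= s)%N -> mB q s.+1 = mB q s *m Bup s.
Proof.
move=> qs; move: (s - q)%N (subnK qs) => l <-.
transitivity (goDown Bup q l.+1); first exact: (mB_down q l.+1).
by rewrite /= mB_down.
Qed.

Lemma mBU r s : (r <= s)%N -> mB s.+1 r = Bdn s *m mB s r.
Proof.
move=> rs; move: (s - r)%N (subnK rs) => l <-.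
transitivity (goUp Bdn r l.+1); first exact: (mB_up r (ltn0Sn l)).
case: l => [|l]; first by rewrite mB0 /= mulmx1.
by rewrite /= mB_up.
Qed.

Lemma mBCD q r s : (q <= r)%N -> (r <= s)%N -> mB q s = mB q r *m mB r s.
Proof.
move=> qr rs; move: (s - r)%N (subnK rs) => l <-; elim: l => [|l IH].
  by rewrite add0n mB0 mulmx1.
rewrite addSn !mBD ?IH ?mulmxA //; lia.
Qed.

Lemma mBCU q r s : (s <= r)%N -> (r <= q)%N -> mB q s = mB q r *m mB r s.
Proof.
move=> sr rq; move: (q - r)%N (subnK rq) => l <-; elim: l => [|l IH].
  by rewrite add0n mB0 mul1mx.
rewrite addSn !mBU ?IH ?mulmxA //; lia.
Qed.

Lemma mBup1 m : mB m m.+1 = Bup m.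
Proof. by rewrite mBD // mB0 mul1mx. Qed.
Lemma mBdn1 m : mB m.+1 m = Bdn m.
Proof. by rewrite mBU // mB0 mulmx1. Qed.
End Mono.

Definition sgn (C : fieldType) (b : bool) : C := if b then -1 else 1.

Lemma sgnK (C : fieldType) b : sgn C b * sgn C b = 1.
Proof. by case: b; rewrite /sgn ?mulrNN mulr1. Qed.

Lemma sgA (C : fieldType) x n :
  sgn C (n < x)%N * (if x == n then -1 else 1) = sgn C (n < x.+1)%N.
Proof.
rewrite /sgn; case: (ltngtP x n) => h.
- by rewrite (_ : (n < x.+1)%N = false) ?mulr1 //; lia.
- by rewrite (_ : (n < x.+1)%N = true) ?mulr1 //; lia.
- by rewrite h ltnSn mul1r.
Qed.

Lemma sgB (C : fieldType) s n :
  (if s == n then -1 else 1) * sgn C (n < s)%N * (-1) ^+ (s - n) = (-1) ^+ (s.+1 - n) :> C.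
Proof.
rewrite /sgn; case: (ltngtP s n) => h.
- have e1 : (s - n = 0)%N by lia.
  have e2 : (s.+1 - n = 0)%N by lia.
  by rewrite e1 e2 expr0 !mulr1.
- have e : (s.+1 - n = (s - n).+1)%N by lia.
  by rewrite e exprS mul1r.
- by rewrite h subnn subSnn expr0 expr1 !mulr1.
Qed.

Lemma sgC (C : fieldType) m n :
  sgn C (m.+1 < n)%N * (if m.+1 == n then -1 else 1) = sgn C (m < n)%N.
Proof.
rewrite /sgn; case: (ltngtP m.+1 n) => h.
- by rewrite mulr1.
- by rewrite mulr1.
- by rewrite mul1r.
Qed.

Lemma sgD (C : fieldType) m n :
  (if m.+1 == n then -1 else 1) * sgn C (m.+1 < n)%N * (-1) ^+ (n - m.+1) = (-1) ^+ (n - m) :> C.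
Proof.
rewrite /sgn; case: (ltngtP m.+1 n) => h.
- have e : (n - m = (n - m.+1).+1)%N by lia.
  by rewrite e exprS mul1r.
- have e1 : (n - m.+1 = 0)%N by lia.
  have e2 : (n - m = 0)%N by lia.
  by rewrite e1 e2 expr0 !mulr1.
- by rewrite -h subnn subSnn expr0 expr1 !mulr1.
Qed.

Lemma sylv (R : comPzRingType) m p (A : 'M[R]_(m,p)) (B : 'M[R]_(p,m)) :
  \det (1%:M - A *m B) = \det (1%:M - B *m A).
Proof.
have e1 : block_mx 1%:M A B 1%:M = block_mx 1%:M 0 B 1%:M *m block_mx 1%:M A 0 (1%:M - B *m A).
  rewrite mulmx_block; congr block_mx.
  - by rewrite mulmx1 mulmx0 addr0.
  - by rewrite mul1mx mul0mx addr0.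
  - by rewrite mulmx1 mulmx0 addr0.
  - by rewrite mul1mx addrC subrK.
have e2 : block_mx 1%:M A B 1%:M = block_mx (1%:M - A *m B) A 0 1%:M *m block_mx 1%:M 0 B 1%:M.
  rewrite mulmx_block; congr block_mx.
  - by rewrite mulmx1 subrK.
  - by rewrite mulmx0 mulmx1 add0r.
  - by rewrite mul0mx mul1mx add0r.
  - by rewrite mulmx0 mulmx1 add0r.
have d1 : \det (block_mx 1%:M 0 B 1%:M) = 1 by rewrite det_lblock !det1 mulr1.
have d2 : \det (block_mx 1%:M A 0 (1%:M - B *m A)) = \det (1%:M - B *m A).
  by rewrite det_ublock det1 mul1r.
have d3 : \det (block_mx (1%:M - A *m B) A 0 1%:M) = \det (1%:M - A *m B).
  by rewrite det_ublock det1 mulr1.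
have := congr1 determinant e1; rewrite e2 !det_mulmx d1 d2 d3.
by rewrite mulr1 mul1r.
Qed.

Local Notation lift M := (map_mx (@polyC _) M).

Definition Phi (C : fieldType) m (M : 'M[C]_m) : {poly C} :=
  \det (1%:M - 'X *: lift M).

Lemma Phi_sylv (C : fieldType) m p (c : C) (A : 'M[C]_(m,p)) (B : 'M[C]_(p,m)) :
  Phi (c *: (A *m B)) = Phi (c *: (B *m A)).
Proof.
rewrite /Phi scalemxAl map_mxM scalemxAl.
rewrite scalemxAr map_mxM scalemxAr.
exact: sylv.
Qed.

Definition geo (C : fieldType) m (M : 'M[C]_m) (c : {poly C}) q : 'M[{poly C}]_m :=
  \sum_(i < q) c ^+ i *: lift (M ^+ i).

Lemma geo_invr (C : fieldType) m (M : 'M[C]_m) c q :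
  (1%:M - c *: lift M) *m geo M c q = 1%:M - c ^+ q *: lift (M ^+ q).
Proof.
elim: q => [|q IH]; first by rewrite /geo big_ord0 mulmx0 expr0 scale1r map_mx1 subrr.
rewrite /geo big_ord_recr /= mulmxDr -/(geo M c q) IH.
rewrite mulmxBl mul1mx.
have -> : c *: lift M *m (c ^+ q *: lift (M ^+ q)) = c ^+ q.+1 *: lift (M ^+ q.+1).
  by rewrite -scalemxAl -scalemxAr scalerA -map_mxM mulmxE -!exprS.
by rewrite addrA subrK.
Qed.

Lemma geo_invl (C : fieldType) m (M : 'M[C]_m) c q :
  geo M c q *m (1%:M - c *: lift M) = 1%:M - c ^+ q *: lift (M ^+ q).
Proof.
elim: q => [|q IH]; first by rewrite /geo big_ord0 mul0mx expr0 scale1r map_mx1 subrr.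
rewrite /geo big_ord_recr /= mulmxDl -/(geo M c q) IH.
rewrite mulmxBr mulmx1.
have -> : c ^+ q *: lift (M ^+ q) *m (c *: lift M) = c ^+ q.+1 *: lift (M ^+ q.+1).
  by rewrite -scalemxAl -scalemxAr scalerA -map_mxM mulmxE -!exprSr.
by rewrite addrA subrK.
Qed.

Lemma geo_entry (C : fieldType) m (M : 'M[C]_m) c q (L : 'M[C]_(1,m)) (Rt : 'M[C]_(m,1)) :
  (lift L *m geo M c q *m lift Rt) 0 0 = \sum_(i < q) c ^+ i * ((L *m M ^+ i *m Rt) 0 0)%:P.
Proof.
rewrite /geo mulmx_sumr mulmx_suml summxE; apply: eq_bigr => i _.
by rewrite -scalemxAr -scalemxAl mxE -!map_mxM mxE.
Qed.

Lemma coef_geoX (C : fieldType) q (x : nat -> C) p :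
  (\sum_(i < q) 'X ^+ i * (x i)%:P)`_p = if (p < q)%N then x p else 0.
Proof.
have -> : \sum_(i < q) 'X ^+ i * (x i)%:P = \sum_(i < q) x i *: 'X^i.
  by apply: eq_bigr => i _; rewrite mulrC mul_polyC.
by rewrite -poly_def coef_poly.
Qed.


Lemma negexp (C : fieldType) m (M : 'M[C]_m) p : (- M) ^+ p = (-1) ^+ p *: M ^+ p.
Proof.
elim: p => [|p IH]; first by rewrite !expr0 scale1r.
by rewrite !exprS IH -!mulmxE -scalemxAr mulNmx scalerN mulN1r scaleNr.
Qed.


Lemma mx11_mid (C : comPzRingType) p r (U : 'M[C]_(p,1)) (S : 'M[C]_1) (V : 'M[C]_(1,r)) :
  U *m S *m V = S 0 0 *: (U *m V).
Proof. by rewrite {1}[S]mx11_scalar mul_mx_scalar scalemxAl. Qed.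

Lemma mx11_l (C : comPzRingType) r (S : 'M[C]_1) (V : 'M[C]_(1,r)) : S *m V = S 0 0 *: V.
Proof. by rewrite {1}[S]mx11_scalar mul_scalar_mx. Qed.

Lemma mx11_r (C : comPzRingType) r (U : 'M[C]_(r,1)) (S : 'M[C]_1) : U *m S = S 0 0 *: U.
Proof. by rewrite {1}[S]mx11_scalar mul_mx_scalar. Qed.

Lemma scal00 (C : pzRingType) p r (M : 'M[C]_(p.+1,r.+1)) c : (c *: M) 0 0 = c * M 0 0.
Proof. by rewrite mxE. Qed.

Lemma add00 (C : pzRingType) p r (M N : 'M[C]_(p.+1,r.+1)) : (M + N) 0 0 = M 0 0 + N 0 0.
Proof. by rewrite mxE. Qed.

Lemma sub00 (C : pzRingType) p r (M N : 'M[C]_(p.+1,r.+1)) : (M - N) 0 0 = M 0 0 - N 0 0.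
Proof. by rewrite !mxE. Qed.

Lemma mx11_mul (C : comPzRingType) (U V : 'M[C]_1) : (U *m V) 0 0 = U 0 0 * V 0 0.
Proof. by rewrite {1}[U]mx11_scalar mul_scalar_mx mxE. Qed.

Lemma det1_sub (C : comPzRingType) (U : 'M[C]_1) : \det (1%:M - U) = 1 - U 0 0.
Proof. by rewrite det_mx11 !mxE. Qed.

Lemma one_subX_neq0 (C : fieldType) (f : {poly C}) : 1 - 'X * f != 0.
Proof.
apply/eqP => /(congr1 (fun p : {poly C} => p`_0)).
by rewrite coefB coef1 coefXM /= coef0 subr0 => /eqP; rewrite oner_eq0.
Qed.

Lemma split_step (C : fieldType) m (M0 M1 : 'M[C]_m) (G : 'M[C]_(m,1)) (D : 'M[C]_(1,m)) r p :
  M1 = M0 + G *m D ->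
  (D *m M0 ^+ r *m M1 ^+ p.+1 *m G) 0 0 =
  (D *m M0 ^+ r.+1 *m M1 ^+ p *m G) 0 0 + (D *m M0 ^+ r *m G) 0 0 * (D *m M1 ^+ p *m G) 0 0.
Proof.
move=> hM.
rewrite exprS -mulmxE {1}hM mulmxDl mulmxDr mulmxDl mxE; congr (_ + _).
  by rewrite exprSr -mulmxE !mulmxA.
by rewrite -mx11_mul !mulmxA.
Qed.
Section Res.
Variables (C : fieldType) (m m' q N e : nat).
Variables (d a : 'M[C]_m) (d' a' : 'M[C]_m').
Variables (g : 'M[C]_(m,1)) (dl : 'M[C]_(1,m)) (g' : 'M[C]_(m',1)) (dl' : 'M[C]_(1,m')).
Variables (X : 'M[C]_(m',m)) (Y : 'M[C]_(m,m')).
Hypothesis ha : a = d + g *m dl.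
Hypothesis hd' : d' = a' + g' *m dl'.
Hypothesis hdn : d ^+ q = 0.
Hypothesis ha'n : a' ^+ q = 0.
Hypothesis hXa : X *m a = - (d' *m X).
Hypothesis hYd : Y *m d' = - (a *m Y).
Hypothesis hPd : Phi d = 1.
Hypothesis hPa' : Phi (- a') = 1.
Hypothesis hPad : Phi a = Phi (- d').
Hypothesis hXY : X *m Y = (-1) ^+ e *: d' ^+ N.
Hypothesis hYX : Y *m X = (-1) ^+ e *: a ^+ N.
Hypothesis hN : ~~ odd N.

Local Notation t := ('X : {poly C}).
Local Notation Rd := (geo d 'X q).
Local Notation Pa := (geo (- a') 'X q).

Lemma Rd_r : (1%:M - t *: lift d) *m Rd = 1%:M.
Proof. by rewrite geo_invr hdn map_mx0 scaler0 subr0. Qed.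
Lemma Rd_l : Rd *m (1%:M - t *: lift d) = 1%:M.
Proof. by rewrite geo_invl hdn map_mx0 scaler0 subr0. Qed.

Lemma a'negn : (- a') ^+ q = 0.
Proof. by rewrite exprNn ha'n mulr0. Qed.

Lemma Pa_r : (1%:M + t *: lift a') *m Pa = 1%:M.
Proof.
have -> : 1%:M + t *: lift a' = 1%:M - t *: lift (- a') by rewrite map_mxN scalerN opprK.
by rewrite geo_invr a'negn map_mx0 scaler0 subr0.
Qed.

Lemma Pa_l : Pa *m (1%:M + t *: lift a') = 1%:M.
Proof.
have -> : 1%:M + t *: lift a' = 1%:M - t *: lift (- a') by rewrite map_mxN scalerN opprK.
by rewrite geo_invl a'negn map_mx0 scaler0 subr0.
Qed.

Local Notation f := ((lift dl *m Rd *m lift g) 0 0).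
Local Notation h := ((lift dl' *m Pa *m lift g') 0 0).

Lemma Phi_a : Phi a = 1 - t * f.
Proof.
have E : 1%:M - t *: lift a =
    (1%:M - t *: lift d) *m (1%:M - (t *: (Rd *m lift g)) *m lift dl).
  rewrite mulmxBr mulmx1 -scalemxAl -scalemxAr !mulmxA Rd_r mul1mx.
  by rewrite ha map_mxD map_mxM scalerDr opprD addrA.
rewrite /Phi E det_mulmx -/(Phi d) hPd mul1r sylv det1_sub.
by rewrite -scalemxAr mxE mulmxA.
Qed.

Lemma Phi_d' : Phi (- d') = 1 + t * h.
Proof.
have E : 1%:M - t *: lift (- d') =
    (1%:M + t *: lift a') *m (1%:M - (- (t *: (Pa *m lift g'))) *m lift dl').
  rewrite mulmxBr mulmx1 mulNmx mulmxN opprK -scalemxAl -scalemxAr !mulmxA Pa_r mul1mx.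
  by rewrite hd' map_mxN map_mxD map_mxM scalerN opprK scalerDr addrA.
have E2 : 1%:M + t *: lift a' = 1%:M - t *: lift (- a') by rewrite map_mxN scalerN opprK.
rewrite /Phi E det_mulmx E2 -/(Phi (- a')) hPa' mul1r sylv det1_sub.
by rewrite mulmxN mxE -scalemxAr mxE mulmxA opprK.
Qed.

Lemma fh : f = - h.
Proof.
have hX : (t != 0) by rewrite polyX_eq0.
have := Phi_d'; rewrite -hPad Phi_a => /addrI; rewrite -mulrN => /(mulfI hX) <-.
by rewrite opprK.
Qed.

Local Notation cc p := ((dl *m d ^+ p *m g) 0 0).
Local Notation cc' p := ((dl' *m a' ^+ p *m g') 0 0).

Lemma f_eq : f = \sum_(i < q) t ^+ i * (cc i)%:P.
Proof. by rewrite geo_entry. Qed.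

Lemma h_eq : h = \sum_(i < q) t ^+ i * ((-1) ^+ i * cc' i)%:P.
Proof.
rewrite geo_entry; apply: eq_bigr => i _.
by rewrite negexp -scalemxAr -scalemxAl mxE.
Qed.

Lemma dpow0 p : (q <= p)%N -> d ^+ p = 0.
Proof. by move=> hp; rewrite -(subnK hp) exprD hdn mulr0. Qed.
Lemma a'pow0 p : (q <= p)%N -> a' ^+ p = 0.
Proof. by move=> hp; rewrite -(subnK hp) exprD ha'n mulr0. Qed.

Lemma G1 p : cc' p = (-1) ^+ p.+1 * cc p.
Proof.
case: (ltnP p q) => hp; last by rewrite dpow0 // a'pow0 // !mulmx0 !mul0mx !mxE mulr0.
have := congr1 (fun P : {poly C} => P`_p) fh.
rewrite f_eq h_eq coefN (coef_geoX q (fun i => cc i)) (coef_geoX q (fun i => (-1) ^+ i * cc' i)) hp => ->.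
by rewrite exprS mulN1r mulrN mulNr opprK mulrA -exprD -signr_odd oddD addbb expr0 mul1r.
Qed.

Lemma Elem p r :
  (dl' *m a' ^+ r *m d' ^+ p *m g') 0 0 = (-1) ^+ (r + p).+1 * (dl *m d ^+ r *m a ^+ p *m g) 0 0.
Proof.
elim: p r => [|p IH] r.
  by rewrite !expr0 !mulmx1 addn0 G1.
rewrite (split_step _ _ hd') (split_step _ _ ha) !IH.
rewrite (_ : (dl' *m d' ^+ p *m g') 0 0 = (dl' *m a' ^+ 0 *m d' ^+ p *m g') 0 0); last by rewrite expr0 mulmx1.
rewrite IH G1 expr0 mulmx1 mulrDr; congr (_ + _).
  by rewrite addSnnS.
rewrite mulrCA !mulrA -!exprD; congr (_ * _ * _); congr (_ ^+ _); lia.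
Qed.

Lemma stepY : lift Y *m (1%:M + t *: lift d') = (1%:M - t *: lift a) *m lift Y.
Proof.
rewrite mulmxDr mulmx1 -scalemxAr -map_mxM hYd map_mxN scalerN.
by rewrite mulmxBl mul1mx -scalemxAl -map_mxM.
Qed.

Lemma stepX : lift X *m (1%:M - t *: lift a) = (1%:M + t *: lift d') *m lift X.
Proof.
rewrite mulmxBr mulmx1 -scalemxAr -map_mxM hXa map_mxN scalerN opprK.
by rewrite mulmxDl mul1mx -scalemxAl -map_mxM.
Qed.

Lemma lift_a : lift a = lift d + lift g *m lift dl.
Proof. by rewrite ha map_mxD map_mxM. Qed.
Lemma lift_d' : lift d' = lift a' + lift g' *m lift dl'.
Proof. by rewrite hd' map_mxD map_mxM. Qed.

Lemma stepL0 : lift dl *m Rd *m (1%:M - t *: lift a) = (1 - t * f) *: lift dl.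
Proof.
rewrite lift_a scalerDr opprD addrA mulmxBr -(mulmxA (lift dl) Rd (1%:M - _)) Rd_l mulmx1.
by rewrite -scalemxAr !mulmxA mx11_l scalerA scalerBl scale1r.
Qed.

Lemma stepL (r : nat) (V : 'M[{poly C}]_(m,r)) :
  lift dl *m Rd *m (1%:M - t *: lift a) *m V = (1 - t * f) *: (lift dl *m V).
Proof. by rewrite stepL0 -scalemxAl. Qed.

Lemma stepR0 : (1%:M - t *: lift a) *m Rd *m lift g = (1 - t * f) *: lift g.
Proof.
rewrite lift_a scalerDr opprD addrA mulmxBl Rd_r mulmxBl mul1mx -!scalemxAl.
rewrite (_ : lift g *m lift dl *m Rd *m lift g = lift g *m (lift dl *m Rd *m lift g)); last by rewrite !mulmxA.
by rewrite mx11_r scalerA scalerBl scale1r.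
Qed.

Lemma stepR (r : nat) (V : 'M[{poly C}]_(r,m)) :
  V *m (1%:M - t *: lift a) *m Rd *m lift g = (1 - t * f) *: (V *m lift g).
Proof. by rewrite -mulmxA -(mulmxA V) (mulmxA _ Rd) stepR0 scalemxAr. Qed.

Lemma stepL'0 : (1%:M + t *: lift d') *m Pa *m lift g' = (1 + t * h) *: lift g'.
Proof.
rewrite lift_d' scalerDr addrA mulmxDl Pa_r mulmxDl mul1mx -!scalemxAl.
rewrite (_ : lift g' *m lift dl' *m Pa *m lift g' = lift g' *m (lift dl' *m Pa *m lift g')); last by rewrite !mulmxA.
by rewrite mx11_r scalerA scalerDl scale1r.
Qed.

Lemma stepL' (r : nat) (V : 'M[{poly C}]_(r,m')) :
  V *m (1%:M + t *: lift d') *m Pa *m lift g' = (1 + t * h) *: (V *m lift g').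
Proof. by rewrite -mulmxA -(mulmxA V) (mulmxA _ Pa) stepL'0 scalemxAr. Qed.

Lemma stepR'0 : lift dl' *m Pa *m (1%:M + t *: lift d') = (1 + t * h) *: lift dl'.
Proof.
rewrite lift_d' scalerDr addrA mulmxDr -(mulmxA (lift dl')) Pa_l mulmx1.
by rewrite -scalemxAr !mulmxA mx11_l scalerA scalerDl scale1r.
Qed.

Lemma stepR' (r : nat) (V : 'M[{poly C}]_(m',r)) :
  lift dl' *m Pa *m (1%:M + t *: lift d') *m V = (1 + t * h) *: (lift dl' *m V).
Proof. by rewrite stepR'0 -scalemxAl. Qed.

Lemma hf : 1 + t * h = 1 - t * f.
Proof. by rewrite fh mulrN opprK. Qed.

Lemma G2 p : (dl *m d ^+ p *m Y *m g') 0 0 = (-1) ^+ p * (dl *m Y *m a' ^+ p *m g') 0 0.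
Proof.
case: (ltnP p q) => hp; last by rewrite dpow0 // a'pow0 // !mulmx0 !mul0mx !mxE mulr0.
pose U := lift dl *m Rd *m lift (Y *m g').
pose Z := lift (dl *m Y) *m Pa *m lift g'.
have E : (1 + t * h) *: U = (1 - t * f) *: Z.
  rewrite /U /Z map_mxM mulmxA -stepL' -(mulmxA (lift dl *m Rd)) stepY mulmxA stepL0.
  by rewrite -!scalemxAl map_mxM.
rewrite hf in E.
have E2 : U 0 0 = Z 0 0.
  apply: (mulfI (one_subX_neq0 f)).
  by have := congr1 (fun M : 'M[{poly C}]_1 => M 0 0) E; rewrite /= !scal00.
have := congr1 (fun P : {poly C} => P`_p) E2.
rewrite /U /Z !geo_entry (coef_geoX q (fun i => (dl *m d ^+ i *m (Y *m g')) 0 0)).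
rewrite (coef_geoX q (fun i => (dl *m Y *m (- a') ^+ i *m g') 0 0)) hp.
by rewrite !mulmxA => ->; rewrite negexp -scalemxAr -scalemxAl scal00.
Qed.

Lemma G3 p : (dl' *m X *m d ^+ p *m g) 0 0 = (-1) ^+ p * (dl' *m a' ^+ p *m X *m g) 0 0.
Proof.
case: (ltnP p q) => hp; last by rewrite dpow0 // a'pow0 // !mulmx0 !mul0mx !mxE mulr0.
pose U := lift (dl' *m X) *m Rd *m lift g.
pose Z := lift dl' *m Pa *m lift (X *m g).
have E : (1 - t * f) *: Z = (1 + t * h) *: U.
  rewrite /Z /U map_mxM mulmxA scalemxAr -stepR0 !mulmxA -(mulmxA (lift dl' *m Pa)) stepX.
  by rewrite mulmxA stepR'0 -!scalemxAl map_mxM.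
rewrite hf in E.
have E2 : Z 0 0 = U 0 0.
  apply: (mulfI (one_subX_neq0 f)).
  by have := congr1 (fun M : 'M[{poly C}]_1 => M 0 0) E; rewrite /= !scal00.
have := congr1 (fun P : {poly C} => P`_p) E2.
rewrite /U /Z !geo_entry (coef_geoX q (fun i => (dl' *m X *m d ^+ i *m g) 0 0)).
rewrite (coef_geoX q (fun i => (dl' *m (- a') ^+ i *m (X *m g)) 0 0)) hp.
by rewrite !mulmxA => <-; rewrite negexp -scalemxAr -!scalemxAl scal00.
Qed.

Local Notation u := ((lift dl *m Rd *m lift (Y *m g')) 0 0).
Local Notation z := ((lift dl' *m Pa *m lift (X *m g)) 0 0).
Local Notation W := ((lift (dl' *m X) *m Rd *m lift (Y *m g')) 0 0).
Local Notation W' := ((lift (dl *m Y) *m Pa *m lift (X *m g)) 0 0).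

Lemma alpha : (lift dl' *m Pa *m lift (X *m Y *m g')) 0 0 = (1 + t * h) * W + t * (z * u).
Proof.
have E1 : lift X *m (1%:M - t *: lift d) =
    lift X *m (1%:M - t *: lift a) + t *: (lift X *m lift g *m lift dl).
  rewrite lift_a scalerDr opprD addrA (mulmxDr (lift X) (1%:M - _)) mulmxN -scalemxAr mulmxA.
  by rewrite subrK.
have E2 : lift (X *m Y *m g') = lift X *m (1%:M - t *: lift d) *m Rd *m lift (Y *m g').
  by rewrite -(mulmxA (lift X)) Rd_r mulmx1 !map_mxM mulmxA.
rewrite E2 E1 stepX mulmxDl mulmxDl mulmxDr !mulmxA stepR'0 add00.
congr (_ + _); first by rewrite -!scalemxAl scal00 !map_mxM !mulmxA.
by rewrite -scalemxAr -!scalemxAl scal00 -mx11_mul !map_mxM !mulmxA.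
Qed.

Lemma beta : (lift dl *m Rd *m lift (Y *m X *m g)) 0 0 = (1 - t * f) * W' - t * (u * z).
Proof.
have E1 : lift Y *m (1%:M + t *: lift a') =
    (1%:M - t *: lift a) *m lift Y - t *: (lift Y *m lift g' *m lift dl').
  rewrite -stepY lift_d' scalerDr addrA (mulmxDr (lift Y) (1%:M + _)).
  by rewrite -scalemxAr mulmxA addrK.
have E2 : lift (Y *m X *m g) = lift Y *m (1%:M + t *: lift a') *m Pa *m lift (X *m g).
  by rewrite -(mulmxA (lift Y)) Pa_r mulmx1 !map_mxM mulmxA.
rewrite E2 E1 mulmxBl mulmxBl mulmxBr !mulmxA stepL0 sub00.
congr (_ - _); first by rewrite -!scalemxAl scal00 !map_mxM !mulmxA.
by rewrite -scalemxAr -!scalemxAl scal00 -mx11_mul !map_mxM !mulmxA.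
Qed.

Lemma S0 : (lift dl' *m Pa *m lift (X *m Y *m g')) 0 0 +
  (lift dl *m Rd *m lift (Y *m X *m g)) 0 0 = 0.
Proof.
rewrite !geo_entry -big_split /=; apply: big1 => i _.
rewrite -mulrDr -polyCD hXY hYX negexp -!scalemxAl -!scalemxAr -!scalemxAl !scal00.
have := Elem N i; rewrite !mulmxA => ->.
have sg1 : (-1) ^+ i * (-1) ^+ (i + N).+1 = -1 :> C.
  rewrite -exprD addnS -signr_odd /= oddD oddD addbA addbb /= (negbTE hN).
  by rewrite expr1.
by rewrite (mulrA ((-1) ^+ i)) sg1 mulN1r mulrN addrC subrr polyC0 mulr0.
Qed.

Lemma G4l p : (dl' *m X *m d ^+ p *m Y *m g') 0 0 = (-1) ^+ p.+1 * (dl *m Y *m a' ^+ p *m X *m g) 0 0.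
Proof.
case: (ltnP p q) => hp; last by rewrite dpow0 // a'pow0 // !mulmx0 !mul0mx !mxE mulr0.
have E : (1 - t * f) * (W + W') = 0.
  have := S0; rewrite alpha beta hf => <-.
  rewrite (mulrC z u); ring.
have E2 : W + W' = 0.
  by move: E => /eqP; rewrite mulf_eq0 (negbTE (one_subX_neq0 f)) /= => /eqP.
have := congr1 (fun P : {poly C} => P`_p) E2.
rewrite coefD coef0 !geo_entry (coef_geoX q (fun i => (dl' *m X *m d ^+ i *m (Y *m g')) 0 0)).
rewrite (coef_geoX q (fun i => (dl *m Y *m (- a') ^+ i *m (X *m g)) 0 0)) hp.
move/eqP; rewrite addr_eq0 => /eqP; rewrite !mulmxA => ->.
by rewrite negexp -scalemxAr -!scalemxAl scal00 exprS mulN1r mulNr.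
Qed.

Lemma Res_all :
  (forall p, cc p = (-1) ^+ p.+1 * cc' p) /\
  (forall p, (dl' *m d' ^+ p *m g') 0 0 = (-1) ^+ p.+1 * (dl *m a ^+ p *m g) 0 0) /\
  (forall p, (dl *m d ^+ p *m Y *m g') 0 0 = (-1) ^+ p * (dl *m Y *m a' ^+ p *m g') 0 0) /\
  (forall p, (dl' *m X *m d ^+ p *m g) 0 0 = (-1) ^+ p * (dl' *m a' ^+ p *m X *m g) 0 0) /\
  (forall p, (dl' *m X *m d ^+ p *m Y *m g') 0 0 = (-1) ^+ p.+1 * (dl *m Y *m a' ^+ p *m X *m g) 0 0).
Proof.
split; first by move=> p; rewrite G1 mulrA -exprD -signr_odd oddD addbb expr0 mul1r.
split; first by move=> p; have := Elem p 0; rewrite !expr0 !mulmx1 add0n.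
split; first exact: G2.
split; first exact: G3.
exact: G4l.
Qed.
End Res.

Section Paths.
Variables (C : fieldType) (v : nat -> nat).
Variables (Bup : forall i, 'M[C]_(v i, v i.+1)) (Bdn : forall i, 'M[C]_(v i.+1, v i)).
Variables (n k1 K1 : nat).
Hypothesis hkn : (k1.+1 < n)%N.
Hypothesis hKn : (K1 + k1.+2 = 2 * n)%N.
Local Notation mB := (monoB Bup Bdn).
Local Notation A i := (Bup i *m Bdn i).
Local Notation Dn i := (Bdn i *m Bup i).
Hypothesis hL : forall m, (m.+1 < k1.+1)%N -> A m.+1 = Dn m.
Hypothesis hM : forall m, (k1.+1 < m.+1 < K1.+1)%N ->
  Dn m = (if m.+1 == n then -1 else 1) *: A m.+1.
Hypothesis hR : forall m, (K1.+1 < m.+1 <= K1 + k1.+1)%N -> Dn m = A m.+1.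
Hypothesis hB0 : Bdn 0 = 0.
Hypothesis hBT : Bup (K1 + k1.+1) = 0.

Lemma Lint m : (m <= k1)%N -> Dn k1 *m mB k1.+1 m.+1 = mB k1.+1 m.+1 *m Dn m.
Proof.
move=> hm; move: (k1 - m)%N (subnK hm) => l e.
elim: l m e hm => [|l IH] m e hm.
  rewrite add0n in e; subst m; by rewrite mB0 mul1mx mulmx1.
rewrite [mB k1.+1 m.+1](mBCU Bup Bdn (r := m.+2)); try lia.
rewrite mBdn1 mulmxA IH; try lia.
by rewrite -!mulmxA hL //; lia.
Qed.

Lemma Lpath m : (m <= k1)%N -> mB k1.+1 m.+1 *m mB m.+1 k1.+1 = (Dn k1) ^+ (k1 - m).
Proof.
move=> hm; move: (k1 - m)%N (subnK hm) => l e.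
elim: l m e hm => [|l IH] m e hm.
  rewrite add0n in e; subst m; by rewrite mB0 mul1mx expr0.
rewrite [mB k1.+1 m.+1](mBCU Bup Bdn (r := m.+2)); try lia.
rewrite [mB m.+1 k1.+1](mBCD Bup Bdn (r := m.+2)); try lia.
rewrite mBdn1 mBup1 -mulmxA (mulmxA (Bdn m.+1)) mulmxA -Lint; try lia.
by rewrite -mulmxA IH ?exprS ?mulmxE //; lia.
Qed.

Lemma Lnil : (Dn k1) ^+ k1.+1 = 0.
Proof.
rewrite exprS; have := Lpath (m:=0) (leq0n _); rewrite subn0 => <-.
by rewrite -mulmxE mulmxA Lint // hB0 mul0mx mulmx0 mul0mx.
Qed.


Local Notation K := K1.+1.
Local Notation k := k1.+1.
Local Notation T := (K1 + k1.+1)%N.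

Lemma Rint s : (K <= s <= T)%N -> A K *m mB K s = mB K s *m A s.
Proof.
move=> /andP[h1 h2]; move: (s - K)%N (subnK h1) => l e.
elim: l s e h1 h2 => [|l IH] s e h1 h2.
  rewrite add0n in e; subst s; by rewrite mB0 mul1mx mulmx1.
rewrite addSn in e; subst s.
rewrite mBD; last lia.
rewrite mulmxA IH; try lia.
by rewrite -!mulmxA -hR //; lia.
Qed.

Lemma Rpath s : (K <= s <= T)%N -> mB K s *m mB s K = A K ^+ (s - K).
Proof.
move=> /andP[h1 h2]; move: (s - K)%N (subnK h1) => l e.
elim: l s e h1 h2 => [|l IH] s e h1 h2.
  rewrite add0n in e; subst s; by rewrite mB0 mul1mx expr0.
rewrite addSn in e; subst s.
rewrite (mBD Bup Bdn (s := (l + K)%N)) ?(mBU Bup Bdn (s := (l + K)%N)); try lia.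
rewrite -mulmxA (mulmxA (Bup _)) mulmxA -Rint; try lia.
by rewrite -mulmxA IH ?exprS ?mulmxE //; lia.
Qed.

Lemma Rnil : A K ^+ k1.+1 = 0.
Proof.
have H : mB K T *m mB T K = A K ^+ k1.
  by rewrite Rpath; [congr (_ ^+ _); lia | lia].
rewrite exprS -H -mulmxE mulmxA Rint; last lia.
by rewrite -mulmxA hBT mul0mx mul0mx mulmx0.
Qed.

Local Notation eps i := (if i == n then -1 else 1 : C).

Lemma hAM m : (k1.+1 < m.+1 < K1.+1)%N -> A m.+1 = eps m.+1 *: Dn m.
Proof.
move=> h; rewrite hM // scalerA.
by case: eqP => _; rewrite ?mulrNN mulr1 scale1r.
Qed.

Lemma Xint m : (k <= m <= K1)%N ->
  mB m.+1 k *m A k = sgn C (n < m.+1)%N *: (Dn m *m mB m.+1 k).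
Proof.
move=> /andP[h1 h2]; move: (m - k)%N (subnK h1) => l e.
elim: l m e h1 h2 => [|l IH] m e h1 h2.
  rewrite add0n in e; subst m; rewrite mBdn1 /sgn (_ : (n < k1.+2)%N = false); last lia.
  by rewrite scale1r mulmxA.
rewrite addSn in e; subst m.
rewrite mBU; last lia.
rewrite -mulmxA IH; try lia.
rewrite -scalemxAr hM; try lia.
rewrite -scalemxAl -scalemxAr scalerA (sgA C); congr (_ *: _).
by rewrite !mulmxA.
Qed.

Lemma Yint s : (k <= s <= K1)%N ->
  A k *m mB k s.+1 = sgn C (n < s.+1)%N *: (mB k s.+1 *m Dn s).
Proof.
move=> /andP[h1 h2]; move: (s - k)%N (subnK h1) => l e.
elim: l s e h1 h2 => [|l IH] s e h1 h2.
  rewrite add0n in e; subst s; rewrite mBup1 /sgn (_ : (n < k1.+2)%N = false); last lia.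
  by rewrite scale1r mulmxA.
rewrite addSn in e; subst s.
rewrite mBD; last lia.
rewrite mulmxA IH; try lia.
rewrite -scalemxAl -mulmxA hM; try lia.
rewrite -scalemxAl -scalemxAr scalerA (sgA C); congr (_ *: _).
by rewrite !mulmxA.
Qed.

Lemma Mkpath s : (k <= s <= K)%N ->
  mB k s *m mB s k = (-1) ^+ (s - n) *: A k ^+ (s - k).
Proof.
move=> /andP[h1 h2]; move: (s - k)%N (subnK h1) => l e.
elim: l s e h1 h2 => [|l IH] s e h1 h2.
  rewrite add0n in e; subst s; rewrite mB0 mul1mx (_ : (k1.+1 - n = 0)%N); last lia.
  by rewrite expr0 scale1r.
rewrite addSn in e; subst s.
rewrite (mBD Bup Bdn (s := (l + k)%N)) ?(mBU Bup Bdn (s := (l + k)%N)); try lia.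
rewrite -mulmxA (mulmxA (Bup _)) mulmxA.
case: l IH h1 h2 => [|l] IH h1 h2.
  rewrite add0n mB0 mul1mx mulmx1 (_ : (k1.+2 - n = 0)%N); last lia.
  by rewrite expr0 expr1 scale1r.
have hm := hM (m := (l + k1.+1)%N).
have hA : A (l.+1 + k1.+1)%N = eps (l.+1 + k1.+1)%N *: Dn (l + k1.+1)%N.
  rewrite hm; last lia.
  by rewrite scalerA; case: eqP => _; rewrite ?mulrNN mulr1 scale1r.
rewrite hA -scalemxAr -scalemxAl.
have hy := Yint (s := (l + k1.+1)%N).
have hY : mB k (l.+1 + k1.+1)%N *m Dn (l + k1.+1)%N =
   sgn C (n < (l.+1 + k1.+1))%N *: (A k *m mB k (l.+1 + k1.+1)%N).
  rewrite hy; last lia.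
  by rewrite scalerA sgnK scale1r.
rewrite hY -scalemxAl scalerA -mulmxA IH; try lia.
rewrite -scalemxAr scalerA mulmxE -exprS.
congr (_ *: _); first by rewrite (sgB C).
all: try by congr (_ ^+ _); lia.
Qed.

Lemma Dint m : (k <= m <= K1)%N ->
  Dn K1 *m mB K m = sgn C (m < n)%N *: (mB K m *m A m).
Proof.
move=> /andP[h1 h2]; move: (K1 - m)%N (subnK h2) => l e.
elim: l m e h1 h2 => [|l IH] m e h1 h2.
  rewrite add0n in e; subst m; rewrite mBdn1 /sgn (_ : (K1 < n)%N = false); last lia.
  by rewrite scale1r !mulmxA.
rewrite [mB K m](mBCU Bup Bdn (r := m.+1)); try lia.
rewrite mBdn1 mulmxA IH; try lia.
rewrite hAM; try lia.
rewrite -scalemxAr -scalemxAl -scalemxAl scalerA (sgC C); congr (_ *: _).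
by rewrite !mulmxA.
Qed.

Lemma MKpath m : (k <= m <= K)%N ->
  mB K m *m mB m K = (-1) ^+ (n - m) *: Dn K1 ^+ (K - m).
Proof.
move=> /andP[h1 h2]; move: (K - m)%N (subnK h2) => l e.
elim: l m e h1 h2 => [|l IH] m e h1 h2.
  rewrite add0n in e; subst m; rewrite mB0 mul1mx (_ : (n - K1.+1 = 0)%N); last lia.
  by rewrite ?subnn expr0 scale1r.
rewrite [mB K m](mBCU Bup Bdn (r := m.+1)); try lia.
rewrite [mB m K](mBCD Bup Bdn (r := m.+1)); try lia.
rewrite mBdn1 mBup1 -mulmxA (mulmxA (Bdn m)) mulmxA.
case: l IH e h1 h2 => [|l] IH e h1 h2.
  have em : m = K1 by lia.
  subst m; rewrite mB0 mul1mx mulmx1 (_ : (n - K1 = 0)%N); last lia.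
  by rewrite ?subSnn expr0 expr1 scale1r.
have hA : Dn m = eps m.+1 *: A m.+1 by rewrite hM //; lia.
rewrite hA -scalemxAr -scalemxAl.
have hd := Dint (m := m.+1).
have hD : mB K m.+1 *m A m.+1 = sgn C (m.+1 < n)%N *: (Dn K1 *m mB K m.+1).
  rewrite hd; last lia.
  by rewrite scalerA sgnK scale1r.
rewrite hD -scalemxAl scalerA -mulmxA IH; try lia.
rewrite -scalemxAr scalerA mulmxE -exprS.
congr (_ *: _); first by rewrite (sgD C).
all: try by congr (_ ^+ _); lia.
Qed.

Lemma LKpath m : (m <= k1)%N ->
  mB K m.+1 *m mB m.+1 K = mB K k *m (Dn k1 ^+ (k1 - m)) *m mB k K.
Proof.
move=> hm.
rewrite [mB K m.+1](mBCU Bup Bdn (r := k)); try lia.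
rewrite [mB m.+1 K](mBCD Bup Bdn (r := k)); try lia.
by rewrite -Lpath // !mulmxA.
Qed.

Lemma Lkpath s : (K <= s <= T)%N ->
  mB k s *m mB s k = mB k K *m (A K ^+ (s - K)) *m mB K k.
Proof.
move=> /andP[h1 h2].
rewrite [mB k s](mBCD Bup Bdn (r := K)); try lia.
rewrite [mB s k](mBCU Bup Bdn (r := K)); try lia.
by rewrite -Rpath ?h1 // !mulmxA.
Qed.


Lemma ChL (c : C) m : (m <= k1)%N -> Phi (c *: Dn m) = 1.
Proof.
elim: m => [|m IH] hm.
  by rewrite hB0 mul0mx scaler0 /Phi map_mx0 scaler0 subr0 det1.
rewrite Phi_sylv hL ?IH //; lia.
Qed.

Lemma ChM s : (k <= s <= K1)%N -> Phi (A k) = Phi (sgn C (n < s.+1)%N *: Dn s).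
Proof.
move=> /andP[h1 h2]; move: (s - k)%N (subnK h1) => l e.
elim: l s e h1 h2 => [|l IH] s e h1 h2.
  rewrite add0n in e; subst s; rewrite /sgn (_ : (n < k1.+2)%N = false); last lia.
  by rewrite -Phi_sylv !scale1r.
rewrite addSn in e; subst s.
rewrite (IH (l + k)%N); try lia.
rewrite hM; try lia.
by rewrite scalerA (sgA C) Phi_sylv.
Qed.

Lemma ChR (c : C) s : (K <= s <= T)%N -> Phi (c *: A s) = 1.
Proof.
move=> /andP[h1 h2]; move: (T - s)%N (subnK h2) => l e.
elim: l s e h1 h2 => [|l IH] s e h1 h2.
  rewrite add0n in e; subst s.
  by rewrite hBT mul0mx scaler0 /Phi map_mx0 scaler0 subr0 det1.
rewrite Phi_sylv hR; try lia.
rewrite IH //; lia.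
Qed.

Variables (g : 'M[C]_(v k1.+1, 1)) (dl : 'M[C]_(1, v k1.+1)).
Variables (g' : 'M[C]_(v K1.+1, 1)) (dl' : 'M[C]_(1, v K1.+1)).
Hypothesis hk : A k1.+1 - Dn k1 = g *m dl.
Hypothesis hK : Dn K1 - A K1.+1 = g' *m dl'.

Lemma sgn_nK : sgn C (n < K1.+1)%N = -1.
Proof. by rewrite /sgn (_ : (n < K1.+1)%N = true) //; lia. Qed.

Lemma even_sign N : ~~ odd N -> (-1) ^+ N = 1 :> C.
Proof. by move=> hN; rewrite -signr_odd (negbTE hN). Qed.

Lemma main_res :
  (forall p, (dl *m Dn k1 ^+ p *m g) 0 0 = (-1) ^+ p.+1 * (dl' *m A K ^+ p *m g') 0 0) /\
  (forall p, (dl' *m Dn K1 ^+ p *m g') 0 0 = (-1) ^+ p.+1 * (dl *m A k ^+ p *m g) 0 0) /\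
  (forall p, (dl *m Dn k1 ^+ p *m mB k K *m g') 0 0 =
             (-1) ^+ p * (dl *m mB k K *m A K ^+ p *m g') 0 0) /\
  (forall p, (dl' *m mB K k *m Dn k1 ^+ p *m g) 0 0 =
             (-1) ^+ p * (dl' *m A K ^+ p *m mB K k *m g) 0 0) /\
  (forall p, (dl' *m mB K k *m Dn k1 ^+ p *m mB k K *m g') 0 0 =
             (-1) ^+ p.+1 * (dl *m mB k K *m A K ^+ p *m mB K k *m g) 0 0).
Proof.
apply: (Res_all (q := k) (N := (K1 - k1)%N) (e := (n - k)%N)).
- by rewrite -hk addrC subrK.
- by rewrite -hK addrC subrK.
- exact: Lnil.
- exact: Rnil.
- rewrite Xint; last lia.
  by rewrite sgn_nK scaleN1r.
- rewrite Yint; last lia.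
  by rewrite sgn_nK scaleN1r opprK.
- by have := ChL 1 (leqnn k1); rewrite scale1r.
- rewrite -scaleN1r ChR //; lia.
- rewrite (ChM (s := K1)); last lia.
  by rewrite sgn_nK scaleN1r.
- rewrite MKpath; last lia.
  by rewrite subSS.
- rewrite Mkpath; last lia.
  rewrite subSS (_ : (K1.+1 - n = n - k1.+1)%N) //; lia.
- rewrite (_ : (K1 - k1 = 2 * (n - k1.+1))%N); last lia.
  by rewrite oddM.
Qed.

Lemma paths_main :
  (forall j, (1 <= j <= k1.+1)%N ->
     [/\ (dl *m pathB Bup Bdn k1.+1 (k1.+1 - j + 1) k1.+1 *m g) 0 0
         = (-1) ^+ j * (dl' *m pathB Bup Bdn K1.+1 (K1.+1 + j - 1) K1.+1 *m g') 0 0,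
         (dl *m pathB Bup Bdn k1.+1 (k1.+1 - j + 1) K1.+1 *m g') 0 0
         = (-1) ^+ (j - 1) * (dl *m pathB Bup Bdn k1.+1 (K1.+1 + j - 1) K1.+1 *m g') 0 0
       & (dl' *m pathB Bup Bdn K1.+1 (k1.+1 - j + 1) k1.+1 *m g) 0 0
         = (-1) ^+ (j - 1) * (dl' *m pathB Bup Bdn K1.+1 (K1.+1 + j - 1) k1.+1 *m g) 0 0]) /\
  (forall j, (1 <= j <= K1.+1)%N ->
     (dl' *m pathB Bup Bdn K1.+1 (K1.+1 - j + 1) K1.+1 *m g') 0 0
     = (-1) ^+ j * (dl *m pathB Bup Bdn k1.+1 (k1.+1 + j - 1) k1.+1 *m g) 0 0).
Proof.
have [R1 [R2 [R3 [R4 R5]]]] := main_res.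
split.
  case=> [|p] // hj.
  rewrite (_ : (k1.+1 - p.+1 + 1 = (k1 - p).+1)%N); last lia.
  rewrite (_ : (K1.+1 + p.+1 - 1 = K1.+1 + p)%N); last lia.
  rewrite (_ : (p.+1 - 1 = p)%N); last lia.
  have Lp : mB k (k1 - p).+1 *m mB (k1 - p).+1 k = Dn k1 ^+ p.
    rewrite Lpath; last lia.
    congr (_ ^+ _); lia.
  have Rp : mB K (K1.+1 + p) *m mB (K1.+1 + p) K = A K ^+ p.
    rewrite Rpath; last lia.
    congr (_ ^+ _); lia.
  rewrite /pathB; split.
  - by rewrite Lp Rp R1.
  - rewrite [mB (k1 - p).+1 K](mBCD Bup Bdn (r := k)); try lia.
    rewrite [mB k (K1.+1 + p)](mBCD Bup Bdn (r := K)); try lia.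
    by rewrite !mulmxA -(mulmxA dl) Lp -(mulmxA (dl *m mB k K)) Rp R3.
  - rewrite [mB K (k1 - p).+1](mBCU Bup Bdn (r := k)); try lia.
    rewrite [mB (K1.+1 + p) k](mBCU Bup Bdn (r := K)); try lia.
    by rewrite !mulmxA -(mulmxA (dl' *m mB K k)) Lp -(mulmxA dl' (mB K (K1.+1 + p))) Rp R4.
case=> [|p] // hj.
rewrite (_ : (K1.+1 - p.+1 + 1 = K1.+1 - p)%N); last lia.
rewrite (_ : (k1.+1 + p.+1 - 1 = k1.+1 + p)%N); last lia.
rewrite /pathB.
case: (leqP p (K1 - k1)) => hpN.
  rewrite MKpath; last lia.
  rewrite Mkpath; last lia.
  rewrite (_ : (K1.+1 - (K1.+1 - p) = p)%N); last lia.
  rewrite (_ : (k1.+1 + p - k1.+1 = p)%N); last lia.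
  rewrite (_ : (n - (K1.+1 - p) = k1.+1 + p - n)%N); last lia.
  rewrite -!scalemxAr -!scalemxAl !scal00 R2.
  by rewrite mulrCA.
rewrite (_ : (K1.+1 - p = (K1 - p).+1)%N); last lia.
rewrite LKpath; last lia.
rewrite Lkpath; last lia.
rewrite (_ : (k1 - (K1 - p) = p - (K1 - k1))%N); last lia.
rewrite (_ : (k1.+1 + p - K1.+1 = p - (K1 - k1))%N); last lia.
rewrite !mulmxA R5.
congr (_ * _).
rewrite [in RHS](_ : p.+1 = ((p - (K1 - k1)).+1 + (K1 - k1))%N); last lia.
rewrite exprD (even_sign (N := (K1 - k1)%N)) ?mulr1 //.
rewrite (_ : (K1 - k1 = 2 * (n - k1.+1))%N); last lia.
by rewrite oddM.
Qed.

End Paths.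

Lemma GD0 (C : fieldType) (v w : nat -> nat) (Gam : forall i, 'M[C]_(v i, w i))
  (Del : forall i, 'M[C]_(w i, v i)) i : w i = 0%N -> Gam i *m Del i = 0.
Proof.
move=> wi; move: (Gam i) (Del i); rewrite wi => G D.
by rewrite ?thinmx0 ?flatmx0 ?mul0mx ?mulmx0.
Qed.



Unset Implicit Arguments.
Theorem lemma4p14 (R : realType) (n k : nat) (v w : nat -> nat)
  (Bup : forall i, 'M[R[i]]_(v i, v i.+1)) (Bdn : forall i, 'M[R[i]]_(v i.+1, v i))
  (Gam : forall i, 'M[R[i]]_(v i, w i)) (Del : forall i, 'M[R[i]]_(w i, v i)) :
  (1 <= k)%N -> (k < n)%N ->
  (forall i, (1 <= i <= (2 * n).-1)%N -> v i = v (2 * n - i)%N) ->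
  (forall i, i != k -> i != (2 * n - k)%N -> w i = 0%N) ->
  w k = 1%N -> w (2 * n - k)%N = 1%N ->
  nonempty_cond n k v ->
  LambdaA n Bup Bdn Gam Del ->
  (forall j, (1 <= j <= k)%N ->
     [/\ scal (Del k *m pathB Bup Bdn k (k - j + 1) k *m Gam k)
         = (-1) ^+ j * scal (Del (2 * n - k)%N *m
              pathB Bup Bdn (2 * n - k) (2 * n - k + j - 1) (2 * n - k) *m Gam (2 * n - k)%N),
         scal (Del k *m pathB Bup Bdn k (k - j + 1) (2 * n - k) *m Gam (2 * n - k)%N)
         = (-1) ^+ (j - 1) * scal (Del k *m
              pathB Bup Bdn k (2 * n - k + j - 1) (2 * n - k) *m Gam (2 * n - k)%N)
       & scal (Del (2 * n - k)%N *m pathB Bup Bdn (2 * n - k) (k - j + 1) k *m Gam k)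
         = (-1) ^+ (j - 1) * scal (Del (2 * n - k)%N *m
              pathB Bup Bdn (2 * n - k) (2 * n - k + j - 1) k *m Gam k)]) /\
  (forall j, (1 <= j <= 2 * n - k)%N ->
     scal (Del (2 * n - k)%N *m pathB Bup Bdn (2 * n - k) (2 * n - k - j + 1) (2 * n - k)
           *m Gam (2 * n - k)%N)
     = (-1) ^+ j * scal (Del k *m pathB Bup Bdn k (k + j - 1) k *m Gam k)).
Proof.
move=> h1k hkn _ hw wk wK _ [hBup0 hBdn0 hBdnT hBupT Heq].
case: k h1k hkn hw wk wK => [//|k1] _ hkn hw wk wK.
pose K1 := (2 * n - k1.+1).-1.
have eK : (2 * n - k1.+1 = K1.+1)%N by rewrite /K1; lia.
have eT : ((2 * n).-1 = K1 + k1.+1)%N by rewrite /K1; lia.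
have hKn : (K1 + k1.+2 = 2 * n)%N by rewrite /K1; lia.
rewrite eK in wK hw *.
have hw' : forall i, i != k1.+1 -> i != K1.+1 -> Gam i *m Del i = 0.
  by move=> i h1 h2; apply: GD0; apply: hw.
have hL : forall m, (m.+1 < k1.+1)%N -> Bup m.+1 *m Bdn m.+1 = Bdn m *m Bup m.
  move=> m hm; have [H1 _] := Heq m ltac:(lia).
  move/eqP: (H1 ltac:(lia)); rewrite hw'; try (apply/eqP; lia).
  by rewrite subr_eq0 => /eqP.
have hM : forall m, (k1.+1 < m.+1 < K1.+1)%N ->
    Bdn m *m Bup m = (if m.+1 == n then -1 else 1) *: (Bup m.+1 *m Bdn m.+1).
  move=> m hm; have [H1 [H2 H3]] := Heq m ltac:(lia).
  rewrite hw' in H1 H2 H3; try (apply/eqP; lia).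
  case: (ltngtP m.+1 n) => h.
  - by move/eqP: (H1 ltac:(lia)); rewrite subr_eq0 scale1r => /eqP.
  - by move/eqP: (H3 ltac:(lia)); rewrite subr_eq0 scale1r => /eqP.
  - by move/eqP: (H2 h); rewrite subr_eq0 eqr_oppLR scaleN1r => /eqP.
have hR : forall m, (K1.+1 < m.+1 <= K1 + k1.+1)%N -> Bdn m *m Bup m = Bup m.+1 *m Bdn m.+1.
  move=> m hm; have [_ [_ H3]] := Heq m ltac:(lia).
  move/eqP: (H3 ltac:(lia)); rewrite hw'; try (apply/eqP; lia).
  by rewrite subr_eq0 => /eqP.
have hBT : Bup (K1 + k1.+1)%N = 0 by rewrite -eT.
have hk : Bup k1.+1 *m Bdn k1.+1 - Bdn k1 *m Bup k1 = Gam k1.+1 *m Del k1.+1.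
  by have [H1 _] := Heq k1 ltac:(lia); apply: H1; lia.
have hK : Bdn K1 *m Bup K1 - Bup K1.+1 *m Bdn K1.+1 = Gam K1.+1 *m Del K1.+1.
  by have [_ [_ H3]] := Heq K1 ltac:(lia); apply: H3; lia.
clear Heq hw hw'.
move: (Gam k1.+1) (Del k1.+1) (Gam K1.+1) (Del K1.+1) hk hK.
rewrite wk wK => g dl g' dl' hk hK.
have [P1 P2] := paths_main hkn hKn hL hM hR hBdn0 hBT hk hK.
by rewrite /scal; split => j hj; rewrite !conform_mx_id; [exact: P1 | exact: P2].
Qed.
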